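(* Let $\varepsilon>0$, let $G$ be a graph and let $w:V(G)\to[0,1]$ be a weight function with $w(V(G))=1$. Let $\mathcal{S}=(S_1,\dots,S_k)$ be a loosely laminar sequence of separations of $G$ such that every $S\in\mathcal{S}$ is $\varepsilon$-skewed, with an anchor $v_i\in C(S_i)$ chosen for each $i$, such that every vertex of $G$ is the anchor of at most one separation in $\mathcal{S}$. Let $\beta_{\mathcal{S}}$ be the central bag for $\mathcal{S}$. Then: (i) $C(S)\subseteq\beta_{\mathcal{S}}$ for every $S\in\mathcal{S}$; (ii) if $G$ is connected and $G[C(S)]$ is connected for every $S\in\mathcal{S}$, then $G[\beta_{\mathcal{S}}]$ is connected; (iii) $w_{\mathcal{S}}(\beta_{\mathcal{S}})=1$ and $\max_{v\in\beta_{\mathcal{S}}}w_{\mathcal{S}}(v)\le \max_{v\in V(G)}w(v)+\varepsilon$.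
   Context: For $X\subseteq V(G)$, $w(X)=\sum_{x\in X}w(x)$. A separation of $G$ is a triple $S=(A,C,B)$ of pairwise disjoint sets with $A\cup C\cup B=V(G)$ and $A$ anticomplete to $B$ (no edges between them); write $A(S)=A$, $C(S)=C$, $B(S)=B$. A separation $(A,C,B)$ is $\varepsilon$-skewed if $w(A)<\varepsilon$ (the paper's convention: whenever a separation is $\varepsilon$-skewed, it is labeled so that $w(A)<\varepsilon$). Two separations $S_1,S_2$ are loosely non-crossing if $A(S_1)\cap C(S_2)=\emptyset$ and $A(S_2)\cap C(S_1)=\emptyset$; a sequence of separations is loosely laminar if every two of its members are loosely non-crossing. The central bag for $\mathcal{S}$ is $\beta_{\mathcal{S}}=\bigcap_{S\in\mathcal{S}}(B(S)\cup C(S))$. Writing $A_i=A(S_i)$, the weight function $w_{\mathcal{S}}$ on $\beta_{\mathcal{S}}$ is defined by $w_{\mathcal{S}}(v)=w(v)+w(A_i\setminus\bigcup_{1\le j<i}A_j)$ if $v=v_i$ is the anchor of $S_i$, and $w_{\mathcal{S}}(v)=w(v)$ otherwise; $w_{\mathcal{S}}(X)=\sum_{x\in X}w_{\mathcal{S}}(x)$. *)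

(* Defs.v *)
From mathcomp Require Import all_boot all_order all_algebra.
Set Implicit Arguments. Unset Strict Implicit. Unset Printing Implicit Defensive.
Import Order.TTheory GRing.Theory Num.Theory.
Local Open Scope ring_scope.

Definition simple_graph (T : finType) (e : rel T) : Prop :=
  irreflexive e /\ symmetric e.

Definition induced_rel (T : finType) (e : rel T) (X : {set T}) : rel T :=
  [rel x y | [&& e x y, x \in X & y \in X]].
Definition connected_in (T : finType) (e : rel T) (X : {set T}) : Prop :=
  forall x y, x \in X -> y \in X -> connect (induced_rel e X) x y.

Definition sepA (T : finType) (S : {set T} * {set T} * {set T}) := S.1.1.
Definition sepC (T : finType) (S : {set T} * {set T} * {set T}) := S.1.2.
Definition sepB (T : finType) (S : {set T} * {set T} * {set T}) := S.2.

Definition is_separation (T : finType) (e : rel T) (S : {set T} * {set T} * {set T}) : Prop :=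
  [/\ [disjoint sepA S & sepC S], [disjoint sepA S & sepB S],
      [disjoint sepC S & sepB S],
      sepA S :|: sepC S :|: sepB S = setT &
      forall a b, a \in sepA S -> b \in sepB S -> ~~ e a b].

Definition wset (T : finType) (R : numDomainType) (w : T -> R) (X : {set T}) : R :=
  \sum_(x in X) w x.

Definition skewed (T : finType) (R : numDomainType) (w : T -> R) (eps : R)
  (S : {set T} * {set T} * {set T}) : Prop := wset w (sepA S) < eps.

Definition loosely_non_crossing (T : finType) (S1 S2 : {set T} * {set T} * {set T}) : Prop :=
  sepA S1 :&: sepC S2 = set0 /\ sepA S2 :&: sepC S1 = set0.

Definition loosely_laminar (T : finType) (k : nat) (S : 'I_k -> {set T} * {set T} * {set T}) : Prop :=
  forall i j, loosely_non_crossing (S i) (S j).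

Definition central_bag (T : finType) (k : nat) (S : 'I_k -> {set T} * {set T} * {set T}) : {set T} :=
  \bigcap_(i < k) (sepB (S i) :|: sepC (S i)).

Definition wS (T : finType) (R : numDomainType) (w : T -> R) (k : nat)
  (S : 'I_k -> {set T} * {set T} * {set T}) (v : 'I_k -> T) (x : T) : R :=
  match [pick i | v i == x] with
  | Some i => w x + wset w (sepA (S i) :\: \bigcup_(j < k | (j < i)%N) sepA (S j))
  | None => w x
  end.

(* Main.v *)
Require Import Defs.
From mathcomp Require Import all_boot all_order all_algebra.
Import Order.TTheory GRing.Theory Num.Theory.
Local Open Scope ring_scope.

Lemma sep_notA (T : finType) (e : rel T) (S : {set T} * {set T} * {set T}) x :
  is_separation e S -> (x \in sepB S :|: sepC S) = (x \notin sepA S).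
Proof.
case=> dAC dAB _ cov _.
have := in_setT x; rewrite -cov !inE => hx.
case xA: (x \in sepA S) => /=.
- have h1 := disjointFr dAC xA; have h2 := disjointFr dAB xA.
  by rewrite h1 h2.
- by move: hx; rewrite xA /= orbC.
Qed.

Arguments sep_notA {T e S} x.

Lemma bag_mem (T : finType) (e : rel T) (k : nat) (S : 'I_k -> {set T} * {set T} * {set T}) x :
  (forall i, is_separation e (S i)) ->
  (x \in central_bag S) = [forall i, x \notin sepA (S i)].
Proof.
move=> hs; apply/bigcapP/forallP => h i.
- by rewrite -(sep_notA x (hs i)); apply: h.
- by move=> _; rewrite (sep_notA x (hs i)).
Qed.

Arguments bag_mem {T e k S} x.

Lemma bigmax_ge (R : realFieldType) (T : eqType) (w : T -> R) (r : seq T) x :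
  x \in r -> w x <= \big[Num.max/0]_(u <- r) w u.
Proof.
elim: r => [|a r IH] //; rewrite big_cons inE => /orP [/eqP ->|/IH h].
- by rewrite le_max lexx.
- by rewrite le_max h orbT.
Qed.

Arguments bigmax_ge {R T} w {r x}.

Lemma sum_sub_le (R : realFieldType) (T : finType) (w : T -> R) (D A : {set T}) :
  (forall x, 0 <= w x) -> D \subset A -> wset w D <= wset w A.
Proof.
move=> w0 sDA; rewrite /wset [X in _ <= X](big_setID D) /=.
rewrite (setIidPr sDA) lerDl; exact: sumr_ge0.
Qed.

Lemma sep_C (T : finType) (e : rel T) (S : {set T} * {set T} * {set T}) x :
  is_separation e S -> x \notin sepA S -> x \notin sepB S -> x \in sepC S.
Proof.
case=> _ _ _ cov _ nA nB.
by have := in_setT x; rewrite -cov !inE (negbTE nA) (negbTE nB) orbF.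
Qed.

Arguments sep_C {T e S x}.

Theorem lemma3p2 (R : realFieldType) (T : finType) (e : rel T) (w : T -> R)
  (eps : R) (k : nat) (S : 'I_k -> {set T} * {set T} * {set T}) (v : 'I_k -> T) :
  0 < eps ->
  simple_graph e ->
  (forall x, 0 <= w x <= 1) ->
  \sum_(x : T) w x = 1 ->
  (forall i, is_separation e (S i)) ->
  loosely_laminar S ->
  (forall i, skewed w eps (S i)) ->
  (forall i, v i \in sepC (S i)) ->
  injective v ->
  [/\ forall i, sepC (S i) \subset central_bag S,
      (connected_in e setT -> (forall i, connected_in e (sepC (S i))) ->
         connected_in e (central_bag S)),
      \sum_(x in central_bag S) wS w S v x = 1 &
      forall x, x \in central_bag S ->
        wS w S v x <= \big[Num.max/0]_(u : T) w u + eps].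
Proof.
move=> eps0 [irr sym] w01 wsum hsep lam skew vC vinj.
have w0 x : 0 <= w x by case/andP: (w01 x).
have CinB i : sepC (S i) \subset central_bag S.
  apply/subsetP => x xC; rewrite (bag_mem x hsep); apply/forallP => j.
  case: (lam j i) => h _; apply/negP => xA.
  have : x \in sepA (S j) :&: sepC (S i) by rewrite inE xA xC.
  by rewrite h inE.
set bag := central_bag S.
pose D i := sepA (S i) :\: \bigcup_(j < k | (j < i)%N) sepA (S j).
pose ex x := if [pick i | v i == x] is Some i then wset w (D i) else 0.
have wSE x : wS w S v x = w x + ex x.
  by rewrite /wS /ex; case: pickP => [i _|_]; rewrite ?addr0.
have pickv i : [pick j | v j == v i] = Some i.
  case: pickP => [j /eqP /vinj -> //|/(_ i)]; by rewrite eqxx.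
split => //.
- move=> cG cC x y xb yb.
  have lift i a b : connect (induced_rel e (sepC (S i))) a b ->
      connect (induced_rel e bag) a b.
    apply: connect_sub => u u' /and3P [euu uC u'C]; apply: connect1.
    by rewrite /induced_rel /= euu !(subsetP (CinB i)).
  pose Z := [set z | (z \in bag) && connect (induced_rel e bag) x z].
  pose W := [set u | (u \in Z) || [exists i, (u \in sepA (S i)) &&
                 [exists c, (c \in sepC (S i)) && (c \in Z)]]].
  have clW u u' : e u u' -> u \in W -> u' \in W.
    move=> euu; rewrite !inE => /orP [|/existsP [i /andP [uA /existsP [c /andP [cCi cZ]]]]].
    + case/andP=> ub cxu.
      case u'b: (u' \in bag).
        by rewrite /= (connect_trans cxu) // connect1 // /induced_rel /= euu ub u'b.
      move/negbT: u'b; rewrite (bag_mem u' hsep) negb_forall => /existsP [i].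
      rewrite negbK => u'A.
      have uC : u \in sepC (S i).
        apply: (sep_C (hsep i)).
          by move: ub; rewrite (bag_mem u hsep) => /forallP.
        apply/negP => uB; case: (hsep i) => _ _ _ _ /(_ u' u u'A uB).
        by rewrite sym euu.
      apply/orP; right; apply/existsP; exists i; rewrite u'A /=.
      by apply/existsP; exists u; rewrite uC inE ub.
    + case u'A: (u' \in sepA (S i)).
        apply/orP; right; apply/existsP; exists i; rewrite u'A /=.
        by apply/existsP; exists c; rewrite cCi.
      have u'C : u' \in sepC (S i).
        apply: (sep_C (hsep i)); first by rewrite u'A.
        by apply/negP => u'B; case: (hsep i) => _ _ _ _ /(_ u u' uA u'B); rewrite euu.
      move: cZ; rewrite inE => /andP [cb cxc].
      rewrite (subsetP (CinB i)) //=; apply/orP; left.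
      by apply: (connect_trans cxc); apply: (lift i); apply: cC.
  have clo : closed e W.
    move=> a b eab; apply/idP/idP; first exact: clW.
    by apply: clW; rewrite sym.
  have cxy : connect e x y.
    rewrite -(eq_connect (e := induced_rel e setT)) ?cG //.
    by move=> a b; rewrite /induced_rel /= !in_setT !andbT.
  have := closed_connect clo cxy.
  have -> : x \in W by rewrite !inE xb connect0.
  move/esym; rewrite !inE => /orP [/andP [] //|/existsP [i /andP [yA _]]].
  by move: yb; rewrite (bag_mem y hsep) => /forallP /(_ i); rewrite yA.
- pose U := \bigcup_(i < k) sepA (S i).
  have bagU : bag = ~: U.
    apply/setP => x; rewrite (bag_mem x hsep) inE.
    apply/forallP/negP => [h /bigcupP [i _ xi]|h i].
    + by move: (h i); rewrite xi.
    + by apply/negP => xi; apply: h; apply/bigcupP; exists i.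
  have ex_out x : x \notin bag -> ex x = 0.
    move=> xb; rewrite /ex; case: pickP => [i /eqP vi|//].
    by move: xb; rewrite -vi (subsetP (CinB i)) // vC.
  have sumex : \sum_x ex x = \sum_i wset w (D i).
    rewrite (bigID (mem (v @: [set: 'I_k]))) /=.
    rewrite [X in _ + X]big1 ?addr0; last first.
      move=> x /imsetP hx; rewrite /ex; case: pickP => [i /eqP vi|//].
      by case: hx; exists i; rewrite ?inE.
    rewrite (eq_bigl (fun x => x \in v @: [set: 'I_k])) //.
    rewrite big_imset; last by move=> a b _ _; apply: vinj.
    rewrite (eq_bigl (fun i => true)); last by move=> i; rewrite inE.
    by apply: eq_bigr => i _; rewrite /ex pickv.
  have sumD : \sum_i wset w (D i) = \sum_(x in U) w x.
    rewrite /wset.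
    transitivity (\sum_i \sum_x (if x \in D i then w x else 0)).
      by apply: eq_bigr => i _; rewrite big_mkcond.
    rewrite exchange_big /= [RHS]big_mkcond /=; apply: eq_bigr => x _.
    case: ifP => xU.
    + case/bigcupP: xU => i0 _ xi0.
      case: (@arg_minnP _ i0 (fun i => x \in sepA (S i)) val xi0) => m xm minm.
      have xDm : x \in D m.
        rewrite inE xm andbT; apply/negP => /bigcupP [j jm xj].
        by have := minm j xj; rewrite leqNgt jm.
      rewrite (bigD1 m) //= xDm big1 ?addr0 // => j jm.
      case: ifP => // /setDP [xj /negP []]; apply/bigcupP; exists m => //.
      by rewrite ltn_neqAle minm // andbT; apply: contraNneq jm => /val_inj ->.
    + apply: big1 => i _; case: ifP => // /setDP [xi _].
      by move: xU; have -> : x \in U by apply/bigcupP; exists i.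
  rewrite (eq_bigr (fun x => w x + ex x)) //.
  rewrite big_split /=.
  have -> : \sum_(x in bag) ex x = \sum_x ex x.
    rewrite [RHS](bigID (mem bag)) /= [X in _ = _ + X]big1 ?addr0 //.
  rewrite sumex sumD -wsum [RHS](bigID (mem U)) /= [RHS]addrC; congr (_ + _).
  by apply: eq_bigl => x; rewrite bagU inE.
- move=> x _; rewrite wSE; apply: lerD.
  + exact: (bigmax_ge w (mem_index_enum x)).
  + rewrite /ex; case: pickP => [i _|_]; last exact: ltW.
    apply: le_trans (ltW (skew i)); apply: sum_sub_le => //.
    exact: subsetDl.
Qed.
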